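(* Let $\mathbb{R}$ be stratified into vertices (points) and edges (open intervals), and let $\mathcal{F}$ be a cellular sheaf of cones on $\mathbb{R}$ with respect to this stratification. Then $$\Gamma(\mathcal{F})=\prod_{v}\mathcal{F}(v)\;\cap\;\ker\Big(\prod_v\mathcal{F}^{\pm}(v)\longrightarrow\prod_e\mathcal{F}^{\pm}(e),\ (\phi_v)_v\mapsto\big(\mathcal{F}^\pm(e_-\leqslant e)(\phi_{e_-})-\mathcal{F}^\pm(e_+\leqslant e)(\phi_{e_+})\big)_e\Big),$$ where $v$ ranges over all vertices, $e$ ranges over all precompact (bounded) edges, and $e_-<e_+$ are the two endpoints of a bounded edge $e$.
   Context: A cone is a (possibly empty) subset of a real vector space closed under addition and multiplication by positive reals; the category of cones has as morphisms functions between cones that are restrictions/corestrictions of linear maps between the vector spaces spanned by the cones. A cellular sheaf of cones on $\mathbb{R}$ (with respect to a stratification into vertices and edges) is a functor $\mathcal{F}$ from the poset of cells (with $v\leqslant e$ when the vertex $v$ is in the closure of the edge $e$) to the category of cones. Its global sections are $\Gamma(\mathcal{F})=\lim_c\mathcal{F}(c)$, the limit over all cells taken in the category of cones. For a cell $c$, $\mathcal{F}^\pm(c)$ denotes the real vector space spanned by $\mathcal{F}(c)$, and $\mathcal{F}^\pm(v\leqslant e)$ the unique linear extension of $\mathcal{F}(v\leqslant e)$. *)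

(* Defs.v *)
From HB Require Import structures.
From mathcomp Require Import all_boot all_order all_algebra.
From mathcomp Require Import all_classical all_reals.
Set Implicit Arguments. Unset Strict Implicit. Unset Printing Implicit Defensive.
Import Order.TTheory GRing.Theory Num.Theory.
Local Open Scope ring_scope.
Local Open Scope classical_set_scope.

Section DProd.
Variables (R : pzRingType) (I : Type) (V : I -> lmodType R).

Definition dprod : Type := forall i, V i.
HB.instance Definition _ := Choice.on dprod.

Definition dprod_zero : dprod := fun i => 0.
Definition dprod_add (f g : dprod) : dprod := fun i => f i + g i.
Definition dprod_opp (f : dprod) : dprod := fun i => - f i.
Definition dprod_scale (a : R) (f : dprod) : dprod := fun i => a *: f i.

Let feq (f g : dprod) : (forall i, f i = g i) -> f = g.
Proof. by move=> h; apply: functional_extensionality_dep. Qed.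

Let addA : associative dprod_add.
Proof. by move=> f g h; apply: feq => i; rewrite /dprod_add addrA. Qed.
Let addC : commutative dprod_add.
Proof. by move=> f g; apply: feq => i; rewrite /dprod_add addrC. Qed.
Let add0 : left_id dprod_zero dprod_add.
Proof. by move=> f; apply: feq => i; rewrite /dprod_add /dprod_zero add0r. Qed.
Let addN : left_inverse dprod_zero dprod_opp dprod_add.
Proof. by move=> f; apply: feq => i; rewrite /dprod_add /dprod_opp /dprod_zero addNr. Qed.

HB.instance Definition _ := @GRing.isNmodule.Build dprod dprod_zero dprod_add addA addC add0.
HB.instance Definition _ := @GRing.Nmodule_isZmodule.Build dprod dprod_opp addN.

Let scA : forall a b (f : dprod), dprod_scale a (dprod_scale b f) = dprod_scale (a * b) f.
Proof. by move=> a b f; apply: feq => i; rewrite /dprod_scale scalerA. Qed.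
Let sc1 : left_id 1 dprod_scale.
Proof. by move=> f; apply: feq => i; rewrite /dprod_scale scale1r. Qed.
Let scDr : right_distributive dprod_scale +%R.
Proof. by move=> a f g; apply: feq => i; rewrite /dprod_scale /= /dprod_add scalerDr. Qed.
Let scDl : forall f : dprod, {morph dprod_scale^~ f : a b / a + b}.
Proof. by move=> f a b; apply: feq => i; rewrite /dprod_scale /= /dprod_add scalerDl. Qed.

HB.instance Definition _ := @GRing.Zmodule_isLmodule.Build R dprod dprod_scale scA sc1 scDr scDl.

End DProd.

(* An object is a pair (V, C) with V a real vector space and C a cone *)
(* in V (possibly empty).  A morphism (V,C) -> (W,D) is represented   *)
(* by a function f : V -> W (only its values on C matter) mapping C   *)
(* into D which is the restriction to C of a linear map               *)
(* span C -> span D.  Two morphisms are equal iff they agree on C.    *)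
Section Cones.
Variable R : realType.

Definition is_cone (V : lmodType R) (C : set V) : Prop :=
  (forall x y, C x -> C y -> C (x + y)) /\
  (forall (a : R) x, 0 < a -> C x -> C (a *: x)).

Definition span (V : lmodType R) (C : set V) : set V :=
  [set x | exists s : seq (R * V),
     (forall p, p \in s -> C p.2) /\ x = \sum_(p <- s) p.1 *: p.2].

Definition linear_on (V W : lmodType R) (A : set V) (g : V -> W) : Prop :=
  forall (a : R) x y, A x -> A y -> g (a *: x + y) = a *: g x + g y.

Definition cone_morphism (V W : lmodType R) (C : set V) (D : set W)
    (f : V -> W) : Prop :=
  (forall x, C x -> D (f x)) /\
  exists g : V -> W,
    [/\ linear_on (span C) g,
        (forall x, span C x -> span D (g x)) &
        (forall x, C x -> g x = f x)].

(* The vertex set Vt is a closed discrete (= locally finite) subset;  *)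
(* the edges are the connected components of R \ Vt, i.e. the open    *)
(* intervals ]lo, hi[ with lo, hi consecutive in Vt u {-oo, +oo}.     *)
Definition locally_finite (Vt : set R) : Prop :=
  forall a b : R, finite_set [set x | Vt x /\ a <= x <= b].

Definition vertex (Vt : set R) : Type := {x : R | Vt x}.

Definition is_edge (Vt : set R) (p : \bar R * \bar R) : Prop :=
  [/\ (p.1 < p.2)%E,
      (p.1 = -oo%E \/ exists2 a, p.1 = a%:E & Vt a),
      (p.2 = +oo%E \/ exists2 b, p.2 = b%:E & Vt b) &
      (forall x, Vt x -> ~ (p.1 < x%:E < p.2)%E)].

Definition edge (Vt : set R) : Type := {p : \bar R * \bar R | is_edge Vt p}.

(* v <= e : the vertex v lies in the closure of the edge e *)
Definition incident (Vt : set R) (v : vertex Vt) (e : edge Vt) : Prop :=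
  (sval e).1 = (sval v)%:E \/ (sval e).2 = (sval v)%:E.

(* A cellular sheaf of cones: a functor from the cell poset to cones.
   The only non-identity arrows are v <= e, so it amounts to cones
   F(v), F(e) and a cone morphism F(v <= e) for each incidence
   (res v e is irrelevant for non-incident pairs). *)
Unset Implicit Arguments.
Record cone_sheaf (Vt : set R) := ConeSheaf {
  FV : vertex Vt -> lmodType R;
  FE : edge Vt -> lmodType R;
  CV : forall v, set (FV v);
  CE : forall e, set (FE e);
  res : forall v e, FV v -> FE e;
  CV_cone : forall w, is_cone (CV w);
  CE_cone : forall d, is_cone (CE d);
  res_mor : forall w d, incident w d -> cone_morphism (CV w) (CE d) (res w d)
}.
Set Implicit Arguments.
Arguments FV {Vt} F v : rename.
Arguments FE {Vt} F e : rename.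
Arguments CV {Vt} F v : rename.
Arguments CE {Vt} F e : rename.
Arguments res {Vt} F v e : rename.

Definition cone_over (Vt : set R) (F : cone_sheaf Vt)
    (X : lmodType R) (K : set X)
    (qV : forall v, X -> FV F v) (qE : forall e, X -> FE F e) : Prop :=
  [/\ is_cone K,
      (forall v, cone_morphism K (CV F v) (qV v)),
      (forall e, cone_morphism K (CE F e) (qE e)) &
      (forall v e, incident v e -> forall x, K x -> res F v e (qV v x) = qE e x)].
Arguments cone_over {Vt} F {X} K qV qE.

Definition is_limit (Vt : set R) (F : cone_sheaf Vt)
    (L : lmodType R) (S : set L)
    (pV : forall v, L -> FV F v) (pE : forall e, L -> FE F e) : Prop :=
  cone_over F S pV pE /\
  forall (X : lmodType R) (K : set X) qV qE, cone_over F K qV qE ->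
    let factors (u : X -> L) :=
      [/\ cone_morphism K S u,
          (forall v x, K x -> pV v (u x) = qV v x) &
          (forall e x, K x -> pE e (u x) = qE e x)] in
    (exists u, factors u) /\
    (forall u u', factors u -> factors u' -> forall x, K x -> u x = u' x).
Arguments is_limit {Vt} F {L} S pV pE.

End Cones.
Arguments cone_sheaf {R} Vt.
Arguments ConeSheaf {R Vt}.
Arguments FV {R Vt} F v : rename.
Arguments FE {R Vt} F e : rename.
Arguments CV {R Vt} F v : rename.
Arguments CE {R Vt} F e : rename.
Arguments res {R Vt} F v e : rename.
Arguments cone_over {R Vt} F {X} K qV qE.
Arguments is_limit {R Vt} F {L} S pV pE.

(* Main.v *)
Require Import Defs.
From HB Require Import structures.
From mathcomp Require Import all_boot all_order all_algebra.
From mathcomp Require Import all_classical all_reals.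
Import Order.TTheory GRing.Theory Num.Theory.
Local Open Scope ring_scope.
Local Open Scope classical_set_scope.

Set Implicit Arguments.
Section Helpers.
Variable R : realType.

Lemma span_sub (V : lmodType R) (C : set V) x : C x -> Defs.span C x.
Proof. by move=> Cx; exists [:: (1, x)]; split => [p|]; rewrite ?inE ?big_seq1 ?scale1r // => /eqP ->. Qed.

Lemma span0 (V : lmodType R) (C : set V) : Defs.span C 0.
Proof. by exists [::]; split => //; rewrite big_nil. Qed.

Lemma spanD (V : lmodType R) (C : set V) x y : Defs.span C x -> Defs.span C y -> Defs.span C (x + y).
Proof.
move=> [s [hs ->]] [t [ht ->]]; exists (s ++ t); split; last by rewrite big_cat.
by move=> p; rewrite mem_cat => /orP [/hs|/ht].
Qed.

Lemma lin_0 (V W : lmodType R) (A : set V) (g : V -> W) :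
  linear_on A g -> A 0 -> g 0 = 0.
Proof.
move=> hg A0; have := hg 1 0 0 A0 A0; rewrite !scale1r addr0 => h.
by apply: (@addrI _ (g 0)); rewrite addr0 -h.
Qed.

Lemma lin_sum (V W : lmodType R) (C : set V) (g : V -> W) (s : seq (R * V)) :
  linear_on (Defs.span C) g -> (forall p, p \in s -> C p.2) ->
  g (\sum_(p <- s) p.1 *: p.2) = \sum_(p <- s) p.1 *: g p.2.
Proof.
move=> hg; elim: s => [|p s IH] hs; first by rewrite !big_nil (lin_0 hg (@span0 _ C)).
rewrite !big_cons hg; last first.
- by exists s; split => // q qs; apply: hs; rewrite inE qs orbT.
- by apply: span_sub; apply: hs; rewrite inE eqxx.
by rewrite IH // => q qs; apply: hs; rewrite inE qs orbT.
Qed.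

Lemma mor_add (V W : lmodType R) (C : set V) (D : set W) f x y :
  cone_morphism C D f -> is_cone C -> C x -> C y -> f (x + y) = f x + f y.
Proof.
move=> [_ [g [hl _ he]]] [cD _] Cx Cy.
have Cxy := cD _ _ Cx Cy; rewrite -!he //.
have := hl 1 x y (@span_sub _ C _ Cx) (@span_sub _ C _ Cy).
by rewrite !scale1r.
Qed.

Lemma mor_scale (V W : lmodType R) (C : set V) (D : set W) f (a : R) x :
  cone_morphism C D f -> is_cone C -> 0 < a -> C x -> f (a *: x) = a *: f x.
Proof.
move=> [_ [g [hl _ he]]] [_ cS] a0 Cx.
have Cax := cS _ _ a0 Cx; rewrite -!he //; have := hl a x 0 (@span_sub _ C _ Cx) (@span0 _ C).
by rewrite !addr0 (lin_0 hl (@span0 _ C)) addr0.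
Qed.

Lemma dprod_sumE (I : Type) (V : I -> lmodType R) (T : Type) (s : seq T)
  (F : T -> dprod V) i : (\sum_(p <- s) F p) i = \sum_(p <- s) F p i.
Proof. by elim: s => [|p s IH]; rewrite ?big_nil ?big_cons //= -IH. Qed.

End Helpers.

Lemma sub0_eq (V : zmodType) (x y : V) : x - y = 0 -> x = y.
Proof. by move/eqP; rewrite subr_eq0 => /eqP. Qed.

Lemma edge_endpoint (R : realType) (Vt : set R) (Vt_ne : Vt !=set0)
  (e : edge Vt) : exists w : vertex Vt, incident w e.
Proof.
case: e => [[p1 p2] [lt h1 h2 hno]]; rewrite /incident /=.
case: h1 => [E1|[a E1 Va]]; last by exists (exist _ a Va); left.
case: h2 => [E2|[b E2 Vb]]; last by exists (exist _ b Vb); right.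
case: Vt_ne => x Vx; exfalso; apply: (hno x Vx); rewrite E1 E2 /=.
by rewrite ltNyr ltry.
Qed.

Lemma compat (R : realType) (Vt : set R) (F : cone_sheaf Vt) (phi : dprod (FV F))
  (hc : forall (e : edge Vt) (a b : vertex Vt),
            (sval e).1 = (sval a)%:E -> (sval e).2 = (sval b)%:E ->
            res F a e (phi a) - res F b e (phi b) = 0)
  (v v' : vertex Vt) (e : edge Vt) :
  incident v e -> incident v' e -> res F v e (phi v) = res F v' e (phi v').
Proof.
have same : forall (x y : R) hx hy, x%:E = y%:E ->
    res F (exist _ x hx) e (phi (exist _ x hx)) = res F (exist _ y hy) e (phi (exist _ y hy)).
  by move=> x y hx hy [xy]; subst; rewrite (Prop_irrelevance hx hy).
case: v => x hx; case: v' => y hy; rewrite /incident /=.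
case=> Ex; case=> Ey.
- by apply: same; rewrite -Ex -Ey.
- exact: @sub0_eq _ _ _ (hc e (exist _ x hx) (exist _ y hy) Ex Ey).
- symmetry; exact: @sub0_eq _ _ _ (hc e (exist _ y hy) (exist _ x hx) Ey Ex).
- by apply: same; rewrite -Ex -Ey.
Qed.

Lemma proj_span (R : realType) (I : Type) (V : I -> lmodType R) (S : set (dprod V))
  (P : forall i, set (V i)) (hS : forall x, S x -> forall i, P i (x i)) x i :
  Defs.span S x -> Defs.span (P i) (x i).
Proof.
move=> [s [hs ->]]; exists [seq (p.1, p.2 i) | p <- s]; split.
  by move=> p /mapP [q qs ->] /=; apply: hS; apply: hs.
by rewrite dprod_sumE big_map.
Qed.

Theorem proposition5p3 (R : realType) (Vt : set R)
    (Vt_lf : locally_finite Vt) (Vt_ne : Vt !=set0) (F : cone_sheaf Vt) :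
  exists pE : forall e : edge Vt, dprod (FV F) -> FE F e,
    is_limit F
      [set phi : dprod (FV F) |
         (forall v, CV F v (phi v)) /\
         (forall (e : edge Vt) (a b : vertex Vt),
            (sval e).1 = (sval a)%:E -> (sval e).2 = (sval b)%:E ->
            res F a e (phi a) - res F b e (phi b) = 0)]
      (fun v (phi : dprod (FV F)) => phi v) pE.
Proof.
set S := [set phi : dprod (FV F) | _ /\ _].
pose w e := projT1 (cid (edge_endpoint Vt_ne e)).
have hw e : incident (w e) e := projT2 (cid (edge_endpoint Vt_ne e)).
exists (fun e (phi : dprod (FV F)) => res F (w e) e (phi (w e))).
have SC : forall x, S x -> forall v, CV F v (x v) by move=> x [].
split.
  split.
  - split.
    + move=> x y [Cx Ex] [Cy Ey]; split.
        by move=> v; case: (@CV_cone _ _ F v) => hadd _; exact: hadd.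
      move=> e a b ea eb.
      change (res F a e (x a + y a) - res F b e (x b + y b) = 0).
      rewrite (mor_add _ _ (@res_mor _ _ F a e (or_introl ea)) (@CV_cone _ _ F a)) //.
      rewrite (mor_add _ _ (@res_mor _ _ F b e (or_intror eb)) (@CV_cone _ _ F b)) //.
      rewrite (@sub0_eq _ _ _ (Ex e a b ea eb)) (@sub0_eq _ _ _ (Ey e a b ea eb)).
      by rewrite subrr.
    + move=> c x c0 [Cx Ex]; split.
        by move=> v; case: (@CV_cone _ _ F v) => _ hsc; exact: hsc.
      move=> e a b ea eb.
      change (res F a e (c *: x a) - res F b e (c *: x b) = 0).
      rewrite (mor_scale _ _ (@res_mor _ _ F a e (or_introl ea)) (@CV_cone _ _ F a)) //.
      rewrite (mor_scale _ _ (@res_mor _ _ F b e (or_intror eb)) (@CV_cone _ _ F b)) //.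
      by rewrite (@sub0_eq _ _ _ (Ex e a b ea eb)) subrr.
  - move=> v; split; first by move=> x [Cx _].
    exists (fun phi : dprod (FV F) => phi v); split => //.
    move=> x sx; exact: (proj_span _ SC).
  - move=> e; have [m1 [g [hl hsp he]]] := @res_mor _ _ F (w e) e (hw e).
    split; first by move=> x [Cx _]; apply: m1.
    exists (fun phi : dprod (FV F) => g (phi (w e))); split.
    + move=> a x y sx sy; apply: hl; exact: (proj_span _ SC).
    + move=> x sx; apply: hsp; exact: (proj_span _ SC).
    + by move=> x [Cx _]; apply: he.
  - by move=> v e ve x [_ Ex]; apply: compat.
move=> X K qV qE [Kc qVm qEm qcomp]; cbv zeta.
split; last first.
  move=> u u' [_ hu _] [_ hu' _] x Kx.
  by apply: functional_extensionality_dep => v; rewrite hu ?hu'.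
pose u := fun x : X => (fun v => qV v x) : dprod (FV F).
have uS : forall x, K x -> S (u x).
  move=> x Kx; split; first by move=> v; exact: (qVm v).1 _ Kx.
  move=> e a b ea eb /=.
  by rewrite (qcomp a e (or_introl ea) x Kx) (qcomp b e (or_intror eb) x Kx) subrr.
have gv v := cid (qVm v).2.
pose G v := projT1 (gv v).
exists u; split.
- split; first exact: uS.
  exists (fun x => (fun v => G v x) : dprod (FV F)); split.
  + move=> a x y sx sy; apply: functional_extensionality_dep => v.
    change (G v (a *: x + y) = a *: G v x + G v y).
    by case: (projT2 (gv v)) => hl _ _; apply: hl.
  + move=> x [s [hs ->]].
    exists [seq (p.1, u p.2) | p <- s]; split.
      by move=> p /mapP [q qs ->] /=; apply: uS; apply: hs.
    apply: functional_extensionality_dep => v.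
    change (G v (\sum_(p <- s) p.1 *: p.2) =
            (\sum_(p <- [seq (p.1, u p.2) | p <- s]) p.1 *: p.2) v).
    case: (projT2 (gv v)) => hl _ he.
    rewrite /G dprod_sumE big_map (lin_sum _ hl hs) big_seq [RHS]big_seq.
    apply: eq_bigr => p ps /=; congr (_ *: _); apply: he; exact: hs.
  + move=> x Kx; apply: functional_extensionality_dep => v.
    by case: (projT2 (gv v)) => _ _ he; apply: he.
- by [].
- by move=> e x Kx /=; apply: qcomp.
Qed.
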